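(* Let $\lambda$ be a partition, $\mu\in\mathcal{D}(\lambda)$ and $\nu\in\mathcal{U}(\lambda)$. Then \[ \lim_{q\to1}\gamma_{\nu/\lambda/\mu}(q,q)=(h_\lambda(c_{\mu,\nu}))^2, \] and consequently \[ \lim_{q\to1}\mathcal{P}_\lambda(\mu\rightarrow\nu)|_{t=q}=\lim_{q\to1}\overline{\mathcal{P}}_\lambda(\mu\leftarrow\nu)|_{t=q}=\frac{(H_\lambda)^2}{H_\mu H_\nu}\cdot\frac{1}{(h_\lambda(c_{\mu,\nu}))^2}. \]
   Context: Partitions are Young diagrams in French convention (cells $(x,y)\in\mathbb{Z}_{>0}^2$, $x\le\lambda_y$), $\lambda'$ the conjugate; for $c=(x,y)\in\lambda$, $a_\lambda(c)=\lambda_y-x$, $\ell_\lambda(c)=\lambda'_x-y$, $h_\lambda(c)=a_\lambda(c)+\ell_\lambda(c)+1$, $H_\kappa=\prod_{c\in\kappa}h_\kappa(c)$. $n(\kappa)=\sum_{c\in\kappa}\ell_\kappa(c)$, $n'(\kappa)=\sum_{c\in\kappa}a_\kappa(c)$, $n(\rho/\kappa)=n(\rho)-n(\kappa)$, $n'(\rho/\kappa)=n'(\rho)-n'(\kappa)$. $\mathcal{U}(\lambda)$ (resp. $\mathcal{D}(\lambda)$): partitions obtained by adding (resp. removing) one cell. For $\kappa\subseteq\rho$, $\mathcal{R}_{\rho/\kappa}$ (resp. $\mathcal{C}_{\rho/\kappa}$): cells of $\kappa$ in a row (resp. column) containing a cell of $\rho/\kappa$. $[i,j]=1-q^it^j$.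 For $\kappa\lessdot\rho$ (one-cell difference): $\alpha_{\rho/\kappa}=\prod_{c\in\mathcal{R}_{\rho/\kappa}}\frac{[a_\kappa(c),\ell_\kappa(c)+1]}{[a_\rho(c),\ell_\rho(c)+1]}\prod_{c\in\mathcal{C}_{\rho/\kappa}}\frac{[a_\kappa(c)+1,\ell_\kappa(c)]}{[a_\rho(c)+1,\ell_\rho(c)]}$, $\overline{\alpha}_{\rho/\kappa}=\prod_{c\in\mathcal{R}_{\rho/\kappa}}\frac{[a_\kappa(c)+1,\ell_\kappa(c)]}{[a_\rho(c)+1,\ell_\rho(c)]}\prod_{c\in\mathcal{C}_{\rho/\kappa}}\frac{[a_\kappa(c),\ell_\kappa(c)+1]}{[a_\rho(c),\ell_\rho(c)+1]}$, $\beta=1/\alpha$, $\overline{\beta}=1/\overline{\alpha}$. With $A=n'(\lambda/\mu)-n'(\nu/\lambda)$, $B=n(\nu/\lambda)-n(\lambda/\mu)$: $\gamma_{\nu/\lambda/\mu}(q,t)=\frac{(1-q^At^B)(1-q^{A+1}t^{B-1})}{(1-q)(1-t)}$, $\mathcal{P}_\lambda(\mu\rightarrow\nu)=t^{B-1}\alpha_{\nu/\lambda}\beta_{\lambda/\mu}/\gamma_{\nu/\lambda/\mu}$, $\overline{\mathcal{P}}_\lambda(\mu\leftarrow\nu)=t^{B-1}\overline{\alpha}_{\nu/\lambda}\overline{\beta}_{\lambda/\mu}/\gamma_{\nu/\lambda/\mu}$. The cell $c_{\mu,\nu}$: let $c_1$ be the cell in the row of $\nu/\lambda$ and the column of $\lambda/\mu$,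 and $c_2$ the cell in the column of $\nu/\lambda$ and the row of $\lambda/\mu$; exactly one of them lies in $\lambda$, and that one is $c_{\mu,\nu}$. *)

(* Defs.v *)
From HB Require Import structures.
From mathcomp Require Import all_boot all_order all_algebra.
From mathcomp Require Import all_classical all_reals all_analysis.
Set Implicit Arguments. Unset Strict Implicit. Unset Printing Implicit Defensive.
Import Order.TTheory GRing.Theory Num.Theory.

(* French convention: a cell is
   (x, y) with x the column and y the row, both >= 1, and x <= lambda_y. *)
Definition is_partition (l : seq nat) : bool :=
  sorted geq l && all (fun r => 0 < r) l.

(* lambda_y (row y, 1-indexed; 0 outside) *)
Definition prow (l : seq nat) (y : nat) : nat := nth 0 l y.-1.
Definition pcol (l : seq nat) (x : nat) : nat := count (fun r => x <= r) l.

Definition cells (l : seq nat) : seq (nat * nat) :=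
  flatten [seq [seq (x.+1, y.+1) | x <- iota 0 (nth 0 l y)] | y <- iota 0 (size l)].

Definition arm (l : seq nat) (c : nat * nat) : nat := prow l c.2 - c.1.
Definition leg (l : seq nat) (c : nat * nat) : nat := pcol l c.1 - c.2.
Definition hook (l : seq nat) (c : nat * nat) : nat := arm l c + leg l c + 1.
Definition Hprod (l : seq nat) : nat := \prod_(c <- cells l) hook l c.
Definition nfun (l : seq nat) : nat := \sum_(c <- cells l) leg l c.
Definition nfun' (l : seq nat) : nat := \sum_(c <- cells l) arm l c.

Definition lessdot (k r : seq nat) : Prop :=
  [/\ is_partition k, is_partition r,
      forall i, nth 0 k i <= nth 0 r i & sumn r = (sumn k).+1].

Definition inD (lam mu : seq nat) : Prop := lessdot mu lam.
Definition inU (lam nu : seq nat) : Prop := lessdot lam nu.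

Definition skew (r k : seq nat) : seq (nat * nat) :=
  [seq c <- cells r | c \notin cells k].
(* the (unique, when kappa <. rho) cell of rho/kappa *)
Definition skew_cell (r k : seq nat) : nat * nat := head (0, 0) (skew r k).

Definition Rcells (r k : seq nat) : seq (nat * nat) :=
  [seq c <- cells k | has (fun d => d.2 == c.2) (skew r k)].
Definition Ccells (r k : seq nat) : seq (nat * nat) :=
  [seq c <- cells k | has (fun d => d.1 == c.1) (skew r k)].

Definition c_mu_nu (lam mu nu : seq nat) : nat * nat :=
  let cl := skew_cell lam mu in
  let cn := skew_cell nu lam in
  let c1 := (cl.1, cn.2) in
  let c2 := (cn.1, cl.2) in
  if c1 \in cells lam then c1 else c2.

Local Open Scope ring_scope.

Section QT.
Variable R : realType.

Definition br (q t : R) (i j : nat) : R := 1 - q ^+ i * t ^+ j.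

Definition alpha (r k : seq nat) (q t : R) : R :=
  (\prod_(c <- Rcells r k)
     (br q t (arm k c) (leg k c).+1 / br q t (arm r c) (leg r c).+1)) *
  (\prod_(c <- Ccells r k)
     (br q t (arm k c).+1 (leg k c) / br q t (arm r c).+1 (leg r c))).

Definition alphabar (r k : seq nat) (q t : R) : R :=
  (\prod_(c <- Rcells r k)
     (br q t (arm k c).+1 (leg k c) / br q t (arm r c).+1 (leg r c))) *
  (\prod_(c <- Ccells r k)
     (br q t (arm k c) (leg k c).+1 / br q t (arm r c) (leg r c).+1)).

Definition beta (r k : seq nat) (q t : R) : R := (alpha r k q t)^-1.
Definition betabar (r k : seq nat) (q t : R) : R := (alphabar r k q t)^-1.

Definition Aexp (nu lam mu : seq nat) : int :=
  ((nfun' lam)%:Z - (nfun' mu)%:Z) - ((nfun' nu)%:Z - (nfun' lam)%:Z).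
Definition Bexp (nu lam mu : seq nat) : int :=
  ((nfun nu)%:Z - (nfun lam)%:Z) - ((nfun lam)%:Z - (nfun mu)%:Z).

Definition gamma (nu lam mu : seq nat) (q t : R) : R :=
  let A := Aexp nu lam mu in let B := Bexp nu lam mu in
  (1 - q ^ A * t ^ B) * (1 - q ^ (A + 1) * t ^ (B - 1)) / ((1 - q) * (1 - t)).

Definition Pforw (lam mu nu : seq nat) (q t : R) : R :=
  t ^ (Bexp nu lam mu - 1) * alpha nu lam q t * beta lam mu q t
    / gamma nu lam mu q t.
Definition Pback (lam mu nu : seq nat) (q t : R) : R :=
  t ^ (Bexp nu lam mu - 1) * alphabar nu lam q t * betabar lam mu q t
    / gamma nu lam mu q t.

End QT.

(* Main.v *)
Require Import Defs.
From HB Require Import structures.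
From mathcomp Require Import all_boot all_order all_algebra.
From mathcomp Require Import all_classical all_reals all_analysis.
From mathcomp Require Import ring lra zify.
Import Order.TTheory GRing.Theory Num.Theory numFieldNormedType.Exports.
Local Open Scope classical_set_scope.
Local Open Scope nat_scope.
Lemma mem_cellsP (l : seq nat) (x y : nat) :
  ((x, y) \in cells l) = [&& 0 < x, x <= nth 0 l y.-1, 0 < y & y <= size l].
Proof.
apply/allpairsPdep/idP.
  case=> [y' [z [Hy Hx [-> ->]]]] /=.
  rewrite mem_iota in Hy; rewrite mem_iota in Hx. apply/andP; split; lia.
case/and4P=> x0 xl y0 ys; exists y.-1, x.-1; rewrite !mem_iota; split => //; try lia.
by rewrite !prednK.
Qed.

Lemma uniq_cells (l : seq nat) : uniq (cells l).
Proof.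
rewrite /cells; elim: (iota 0 (size l)) (iota_uniq 0 (size l)) => [|a s IH] //=.
case/andP=> aS us; rewrite cat_uniq IH // andbT.
rewrite map_inj_uniq ?iota_uniq; last by move=> u v [].
apply/hasPn => c /allpairsPdep [y' [z [Hy _ ->]]].
apply/mapP => -[z' _ [_ E]]; move: aS; rewrite -E.
by rewrite Hy.
Qed.

Lemma geq_trans : transitive geq.
Proof. by move=> ? ? ? h1 h2; exact: leq_trans h2 h1. Qed.

Lemma count0 (l : seq nat) a x : all (fun b => b <= a) l -> a < x ->
  count (fun r => x <= r) l = 0.
Proof.
move=> Hall xa; apply/eqP; rewrite eqn0Ngt -has_count; apply/hasPn => b bl.
by rewrite -ltnNge; apply: leq_ltn_trans xa; exact: (allP Hall).
Qed.

Lemma pcolP (l : seq nat) (x y : nat) : sorted geq l -> 0 < x -> 0 < y ->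
  (y <= pcol l x) = (x <= nth 0 l y.-1).
Proof.
rewrite /pcol; elim: l y => [|a l IH] y /= Hs x0 y0.
  by rewrite nth_nil; lia.
have Hl : sorted geq l by move: Hs; case: l {IH} => //= b l /andP[].
have Hall : all (fun b => b <= a) l.
  by move: Hs; rewrite (path_sortedE geq_trans) => /andP[].
case: y y0 => [//|[|y]] _ /=.
  case: (leqP x a) => //= xa; rewrite add0n.
  by rewrite (@count0 l a x Hall xa).
case: (leqP x a) => xa /=.
  by rewrite add1n ltnS IH.
rewrite add0n (@count0 l a x Hall xa).
symmetry; apply: negbTE; rewrite -ltnNge.
case: (ltnP y (size l)) => yl; last by rewrite nth_default.
by apply: leq_ltn_trans xa; apply: (allP Hall); exact: mem_nth.
Qed.

Lemma sumn_ord (l : seq nat) N : size l <= N -> sumn l = \sum_(j < N) nth 0 l j.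
Proof.
elim: l N => [|a l IH] [|N] //=; try by rewrite big1 // => j; rewrite nth_nil.
by move=> sl; rewrite big_ord_recl /= (IH N).
Qed.

Lemma lessdot_nth (k r : seq nat) : lessdot k r ->
  exists i : nat, forall j, nth 0 r j = nth 0 k j + (j == i).
Proof.
case=> _ _ Hle Hs.
set N := size r + size k.
have Er := @sumn_ord r N (leq_addr _ _).
have Ek := @sumn_ord k N (leq_addl _ _).
have Ed : \sum_(j < N) (nth 0 r j - nth 0 k j) = 1.
  have : \sum_(j < N) nth 0 r j = \sum_(j < N) nth 0 k j + \sum_(j < N) (nth 0 r j - nth 0 k j).
    by rewrite -big_split /=; apply: eq_bigr => j _; rewrite subnKC.
  rewrite -Er -Ek Hs; lia.
have [i Hi] : exists i : 'I_N, nth 0 r i - nth 0 k i != 0.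
  apply/existsP; apply: contraT; rewrite negb_exists => /forallP H.
  move: Ed; rewrite big1 // => j _; apply/eqP; move: (H j); by rewrite negbK.
move: Ed; rewrite (bigD1 i) //= => Ed.
have Hrest : \sum_(j < N | j != i) (nth 0 r j - nth 0 k j) = 0.
  move: Hi Ed; set d := nth 0 r i - nth 0 k i; set S := \sum_(_ < _ | _) _; clearbody d S; lia.
exists i => j.
case: (ltnP j N) => jN.
  case: (eqVneq j i) => [->|ne].
    rewrite Hrest addn0 in Ed; have := Hle i; move: Ed; lia.
  move/eqP: Hrest; rewrite sum_nat_eq0 => /forallP /(_ (Ordinal jN)) /=.
  have -> : (Ordinal jN != i) by apply: contra ne => /eqP <-.
  move=> /= /eqP; have := Hle j; lia.
rewrite !nth_default /=; try lia.
case: (eqVneq j i) => [E|//]; have := ltn_ord i; rewrite -E; lia.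
Qed.

Lemma mem_cells (l : seq nat) (x y : nat) :
  ((x, y) \in cells l) = [&& 0 < x, 0 < y & x <= nth 0 l y.-1].
Proof.
rewrite mem_cellsP; case: (posnP x) => [->|x0] //=; case: (posnP y) => [->|y0] /=.
  by rewrite !andbF.
case: (leqP x (nth 0 l y.-1)) => //= xl.
case: (ltnP y.-1 (size l)) => yl; first lia.
by move: xl; rewrite nth_default //; lia.
Qed.

Lemma pcol_iota (l : seq nat) x N : 0 < x -> size l <= N ->
  pcol l x = count (fun j => x <= nth 0 l j) (iota 0 N).
Proof.
move=> x0 sN; rewrite /pcol -{1}(mkseq_nth 0 l) /mkseq count_map.
rewrite -(subnKC sN) iotaD count_cat add0n.
have -> : count (fun j => x <= nth 0 l j) (iota (size l) (N - size l)) = 0.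
  apply/eqP; rewrite eqn0Ngt -has_count; apply/hasPn => j.
  rewrite mem_iota => /andP[jl _]; rewrite nth_default //; lia.
by rewrite addn0.
Qed.

Lemma count_incr (f : nat -> nat) i x m N :
  count (fun j => x <= f j + (j == i)) (iota m N) =
  count (fun j => x <= f j) (iota m N) + ((x == (f i).+1) && (m <= i < m + N)).
Proof.
elim: N m => [|N IH] m /=.
  by rewrite addn0; case: (x == _); case: leqP.
rewrite IH addnS -addSn; case: (eqVneq m i) => [<-|ne].
  rewrite ltnn leqnn leq_addr andbF /= addn0 addn1 andbT.
  by case: (ltngtP x (f m).+1) => h /=; rewrite ?(ltnW h) ?h ?leqnn ?ltnn ?(leqNgt x) ?ltnS ?h /=; lia.
rewrite addn0 addnA.
have -> : (m < i) = (m <= i) by rewrite ltn_neqAle ne.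
by [].
Qed.

Definition newc (k : seq nat) (i : nat) : nat * nat := pair (nth 0 k i).+1 i.+1.

Lemma lessdot_struct k r : lessdot k r -> exists i : nat,
  [/\ (forall j, nth 0 r j = nth 0 k j + (j == i)),
      perm_eq (cells r) (newc k i :: cells k),
      Defs.skew r k = [:: newc k i],
      (forall z, 0 < z -> pcol r z = pcol k z + (z == (nth 0 k i).+1))
      & pcol k (nth 0 k i).+1 = i].
Proof.
move=> Hld; have [i Hi] := @lessdot_nth k r Hld.
case: Hld => /andP[sk _] /andP[sr _] _ _.
set x := (nth 0 k i).+1.
have ir : i < size r.
  case: (ltnP i (size r)) => // ri; move: (Hi i); rewrite nth_default // eqxx; lia.
have nk : (x, i.+1) \notin cells k by rewrite mem_cells /x ltnn !andbF.
have memr : cells r =i (x, i.+1) :: cells k.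
  move=> [a b]; rewrite inE !mem_cells xpair_eqE Hi.
  case: b => [|b] /=; first by rewrite !andbF.
  case: (eqVneq b i) => [->|ne] /=; last by rewrite addn0 eqSS (negbTE ne) andbF.
  rewrite eqxx andbT /x; apply/idP/idP; lia.
have Hperm : perm_eq (cells r) ((x, i.+1) :: cells k).
  by apply: uniq_perm => //; rewrite /= ?nk uniq_cells.
have Hpcol : forall z, 0 < z -> pcol r z = pcol k z + (z == x).
  move=> z x0; rewrite (@pcol_iota r z (size r + size k)) ?leq_addr //.
  rewrite (@pcol_iota k z (size r + size k)) ?leq_addl //.
  rewrite (eq_count (a2 := fun j => z <= nth 0 k j + (j == i))); last by move=> j; rewrite Hi.
  rewrite count_incr add0n /= ltn_addr // andbT //.
have pk : pcol k x = i.
  apply/eqP; rewrite eqn_leq; apply/andP; split.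
    rewrite leqNgt; apply/negP; rewrite (@pcolP k x i.+1 sk) //= /x ltnn //.
  rewrite /x; clear nk memr Hperm Hpcol x.
  case: i Hi ir => [//|i] Hi ir.
  rewrite (@pcolP k _ i.+1 sk) //=.
  have h1 := Hi i; have h2 := Hi i.+1; rewrite eqxx in h2.
  rewrite (ltn_eqF (ltnSn i)) in h1.
  have := @sorted_leq_nth _ geq geq_trans leqnn 0 r sr i i.+1.
  rewrite !inE ir => /(_ (ltnW ir) isT (leqnSn i)) /=; lia.
exists i; split => //.
have E0 : [seq c <- cells k | c \notin cells k] = [::].
  apply/eqP; rewrite -size_eq0 size_filter.
  by rewrite eqn0Ngt -has_count; apply/hasPn => c ->.
rewrite /Defs.skew (perm_small_eq _ (perm_filter _ Hperm)) //= nk E0 //.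
Qed.

Lemma sum_bool_count (T : Type) (s : seq T) (P : pred T) :
  \sum_(c <- s) (P c : nat) = count P s.
Proof. rewrite -sum1_count [RHS]big_mkcond; apply: eq_bigr => c _; by case: (P c). Qed.

Lemma sumn_pick (g : nat -> nat) i m n :
  sumn [seq (y == i) * g y | y <- iota m n] = (m <= i < m + n) * g i.
Proof.
elim: n m => [|n IH] m /=; first by rewrite addn0; case: leqP.
rewrite IH; case: (eqVneq m i) => [<-|ne] /=.
  rewrite leqnn ltnn addnS ltnS leq_addr /=; lia.
rewrite mul0n add0n addSnnS; congr (_ * _).
by rewrite [in RHS]leq_eqVlt (negbTE ne).
Qed.

Lemma count_row (k : seq nat) i :
  count (fun c : nat * nat => c.2 == i.+1) (cells k) = nth 0 k i.
Proof.
rewrite /cells count_flatten -map_comp.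
rewrite (eq_map (g := fun y => (y == i) * nth 0 k y)); last first.
  move=> y /=; rewrite count_map /=.
  rewrite (eq_count (a2 := fun _ => y == i)); last by move=> z; rewrite /= eqSS.
  case: (y == i); first by rewrite mul1n count_predT size_iota.
  by rewrite mul0n count_pred0.
rewrite sumn_pick /=; case: (ltnP i (size k)) => h; first by rewrite mul1n.
by rewrite mul0n nth_default.
Qed.

Lemma count_col (k : seq nat) x : 0 < x ->
  count (fun c : nat * nat => c.1 == x) (cells k) = pcol k x.
Proof.
move=> x0; rewrite /cells count_flatten -map_comp.
rewrite (eq_map (g := fun y => (x <= nth 0 k y : nat))); last first.
  move=> y /=; rewrite count_map /=.
  case: x x0 => // x _.
  rewrite (eq_count (a2 := pred1 x)); last by move=> z; rewrite /= eqSS.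
  by rewrite count_uniq_mem ?iota_uniq // mem_iota.
by rewrite sumn_count (@pcol_iota k x (size k)).
Qed.

Section LD.
Variables (k r : seq nat) (i : nat).
Hypothesis Hi : forall j, nth 0 r j = nth 0 k j + (j == i).
Hypothesis Hperm : perm_eq (cells r) (newc k i :: cells k).
Hypothesis Hskew : Defs.skew r k = [:: newc k i].
Hypothesis Hpcol : forall z, 0 < z -> pcol r z = pcol k z + (z == (nth 0 k i).+1).
Hypothesis pk : pcol k (nth 0 k i).+1 = i.
Hypothesis sk : sorted geq k.

Lemma newc_notin : newc k i \notin cells k.
Proof. by rewrite mem_cells /= ltnn. Qed.

Lemma arm_r c : c \in cells k -> arm r c = arm k c + (c.2 == i.+1).
Proof.
case: c => a b; rewrite mem_cells /arm /prow /= Hi => /and3P[a0 b0 ab].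
have -> : (b.-1 == i) = (b == i.+1) by case: b b0 {ab} => // b _; rewrite eqSS.
lia.
Qed.

Lemma leg_r c : c \in cells k -> leg r c = leg k c + (c.1 == (nth 0 k i).+1).
Proof.
case: c => a b; rewrite mem_cells /leg /= => /and3P[a0 b0 ab].
rewrite Hpcol //; have : b <= pcol k a by rewrite (@pcolP k a b sk).
lia.
Qed.

Lemma hook_new : hook r (newc k i) = 1.
Proof.
rewrite /hook /arm /leg /prow /= Hi eqxx Hpcol // pk eqxx; lia.
Qed.

Lemma Rcells_eq : Rcells r k = [seq c <- cells k | c.2 == i.+1].
Proof. rewrite /Rcells Hskew; apply: eq_filter => c /=; by rewrite orbF eq_sym. Qed.

Lemma Ccells_eq : Ccells r k = [seq c <- cells k | c.1 == (nth 0 k i).+1].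
Proof. rewrite /Ccells Hskew; apply: eq_filter => c /=; by rewrite orbF eq_sym. Qed.

Lemma nfun'_r : nfun' r = nfun' k + nth 0 k i.
Proof.
rewrite /nfun' (perm_big _ Hperm) big_cons.
have -> : arm r (newc k i) = 0 by rewrite /arm /prow /= Hi eqxx; lia.
rewrite [X in X = _]/= add0n (eq_big_seq (fun c => arm k c + (c.2 == i.+1))); last first.
  by move=> c; exact: arm_r.
by rewrite big_split /= sum_bool_count count_row.
Qed.

Lemma nfun_r : nfun r = nfun k + i.
Proof.
rewrite /nfun (perm_big _ Hperm) big_cons.
have -> : leg r (newc k i) = 0 by rewrite /leg /= Hpcol // pk eqxx; lia.
rewrite [X in X = _]/= add0n (eq_big_seq (fun c => leg k c + (c.1 == (nth 0 k i).+1))); last first.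
  by move=> c; exact: leg_r.
by rewrite big_split /= sum_bool_count count_col // pk.
Qed.

Lemma hook_ratio (F : numFieldType) :
  (\prod_(c <- Rcells r k) ((hook k c)%:R / (hook r c)%:R) *
   \prod_(c <- Ccells r k) ((hook k c)%:R / (hook r c)%:R) : F)%R
  = ((Hprod k)%:R / (Hprod r)%:R)%R.
Proof.
have hr : Hprod r = \prod_(c <- cells k) hook r c.
  by rewrite /Hprod (perm_big _ Hperm) big_cons hook_new [LHS]/= mul1n.
rewrite hr /Hprod !GRing.natr_prod -GRing.prodf_div Rcells_eq Ccells_eq !big_filter.
rewrite [RHS](bigID (fun c => c.2 == i.+1)) /=; congr (_ * _)%R.
rewrite [RHS](bigID (fun c => c.1 == (nth 0 k i).+1)) /=.
rewrite [X in _ = (_ * X)%R]big1_seq ?GRing.mulr1; last first.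
  move=> c /andP[/andP[h1 h2] hc].
  rewrite /hook (arm_r c hc) (leg_r c hc) (negbTE h1) (negbTE h2) !addn0 GRing.divff // ?Num.Theory.pnatr_eq0 ?addn1.
rewrite big_seq_cond [RHS]big_seq_cond; apply: eq_bigl => c.
case hc: (c \in cells k) => //=; case e1: (c.1 == _); rewrite ?andbF ?andbT //.
symmetry; apply/negP => e2; move: newc_notin; rewrite /newc.
by case: c hc e1 e2 => a b /= hc /eqP <- /eqP <-; rewrite hc.
Qed.

End LD.

Local Open Scope classical_set_scope.
Local Open Scope ring_scope.

Section Ana.
Variable R : realType.

Lemma q_to1 : (fun q : R => q) @ (1:R)^' --> (1:R).
Proof. exact: nbhs_dnbhs. Qed.

Lemma near1_neq1 : \forall q \near (1:R)^', q != 1.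
Proof. exact: nbhs_dnbhs_neq. Qed.

Lemma near1_gt0 : \forall q \near (1:R)^', 0 < q.
Proof. exact: (@cvgr_gt _ _ _ _ (fun q : R => q) 1 q_to1 0 ltr01). Qed.

Lemma cvg_bigprod (T : Type) (s : seq T) (F : T -> R -> R) (L : T -> R) :
  (forall c, F c q @[q --> (1:R)^'] --> L c) ->
  \prod_(c <- s) F c q @[q --> (1:R)^'] --> \prod_(c <- s) L c.
Proof.
move=> H; elim: s => [|a s IH].
  under eq_fun do rewrite big_nil. by rewrite big_nil; exact: cvg_cst.
under eq_fun do rewrite big_cons. rewrite big_cons. exact: cvgM.
Qed.

Lemma cvg_bigsum (n : nat) (F : nat -> R -> R) (L : nat -> R) :
  (forall c, F c q @[q --> (1:R)^'] --> L c) ->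
  \sum_(c < n) F c q @[q --> (1:R)^'] --> \sum_(c < n) L c.
Proof.
move=> H; elim: n => [|n IH].
  under eq_fun do rewrite big_ord0. by rewrite big_ord0; exact: cvg_cst.
under eq_fun do rewrite big_ord_recr. rewrite big_ord_recr. exact: cvgD.
Qed.

Lemma cvgXn (n : nat) : q ^+ n @[q --> (1:R)^'] --> (1:R).
Proof.
elim: n => [|n IH]; first by under eq_fun do rewrite expr0; exact: cvg_cst.
under eq_fun do rewrite exprS. have := cvgM q_to1 IH; rewrite mulr1; exact.
Qed.

Lemma lim_nat (n : nat) : (1 - q ^+ n) / (1 - q) @[q --> (1:R)^'] --> (n%:R : R).
Proof.
have -> : (n%:R : R) = \sum_(i < n) 1 by rewrite sumr_const card_ord.
apply: cvg_trans; last first.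
  apply: (@cvg_bigsum n (fun i q => q ^+ i) (fun _ => 1)) => c; exact: cvgXn.
apply: near_eq_cvg; near=> q => /=.
have hq : q != 1 by near: q; exact: near1_neq1.
have h1 : 1 - q != 0 by rewrite subr_eq0 eq_sym.
rewrite -opprB subrX1 -mulNr opprB mulrC mulKf //.
Unshelve. all: by end_near. Qed.


Lemma lim_int (m : int) : (1 - q ^ m) / (1 - q) @[q --> (1:R)^'] --> (m%:~R : R).
Proof.
case: m => n.
  exact: lim_nat.
rewrite NegzE.
have L : - ((1 - q ^+ n.+1) / (1 - q)) / q ^+ n.+1 @[q --> (1:R)^'] --> (- (n.+1)%:R / 1 : R).
  apply: cvgM; first exact: cvgN (lim_nat _).
  apply: cvgV; [exact: oner_neq0|exact: cvgXn].
rewrite divr1 in L; rewrite mulrNz.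
apply: cvg_trans L; apply: near_eq_cvg; near=> q => /=.
have hq : q != 1 by near: q; exact: near1_neq1.
have hq0 : 0 < q by near: q; exact: near1_gt0.
have h1 : 1 - q != 0 by rewrite subr_eq0 eq_sym.
have hp : q ^+ n.+1 != 0 by rewrite expf_neq0 // gt_eqF.
rewrite -exprnN. by field; rewrite h1 hp.
Unshelve. all: by end_near. Qed.

Lemma cvg_exprz (m : int) : q ^ m @[q --> (1:R)^'] --> (1:R).
Proof.
case: m => n; first exact: cvgXn.
have := cvgV (oner_neq0 R) (cvgXn n.+1); rewrite invr1; exact.
Qed.


Lemma ratio_lim (a b c d : nat) : (0 < c + d)%N ->
  br q q a b / br q q c d @[q --> (1:R)^'] --> ((a + b)%:R / (c + d)%:R : R).
Proof.
move=> cd.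
have cd' : ((c + d)%:R : R) != 0 by rewrite pnatr_eq0 -lt0n.
have L : (1 - q ^+ (a + b)) / (1 - q) * ((1 - q ^+ (c + d)) / (1 - q))^-1
   @[q --> (1:R)^'] --> ((a + b)%:R / (c + d)%:R : R).
  apply: cvgM; first exact: lim_nat.
  by apply: cvgV => //; exact: lim_nat.
apply: cvg_trans L; apply: near_eq_cvg; near=> q => /=.
have hq : q != 1 by near: q; exact: near1_neq1.
have h1 : 1 - q != 0 by rewrite subr_eq0 eq_sym.
by rewrite /br -!exprD invf_div mulrA divfK.
Unshelve. all: by end_near. Qed.

Lemma gamma_lim (A B : int) :
  (1 - q ^ A * q ^ B) * (1 - q ^ (A + 1) * q ^ (B - 1)) / ((1 - q) * (1 - q))
    @[q --> (1:R)^'] --> ((A + B)%:~R ^+ 2 : R).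
Proof.
have L : (1 - q ^ (A + B)) / (1 - q) * ((1 - q ^ (A + B)) / (1 - q))
   @[q --> (1:R)^'] --> ((A + B)%:~R ^+ 2 : R).
  by rewrite expr2; apply: cvgM; exact: lim_int.
apply: cvg_trans L; apply: near_eq_cvg; near=> q => /=.
have hq0 : 0 < q by near: q; exact: near1_gt0.
have uq : q \is a GRing.unit by rewrite unitfE gt_eqF.
rewrite -!exprzDr // mulf_div.
by have -> : A + 1 + (B - 1) = A + B by rewrite addrACA subrr addr0.
Unshelve. all: by end_near. Qed.

End Ana.

Lemma hookE (l : seq nat) c : hook l c = (arm l c + (leg l c).+1)%N.
Proof. rewrite /hook; lia. Qed.

Lemma hookE' (l : seq nat) c : hook l c = ((arm l c).+1 + leg l c)%N.
Proof. rewrite /hook; lia. Qed.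

Section Final.
Variable R : realType.

Lemma alpha_lim k r : lessdot k r ->
  alpha r k q q @[q --> (1:R)^'] --> ((Hprod k)%:R / (Hprod r)%:R : R).
Proof.
move=> Hld; have [i [Hi Hp Hs Hc pk]] := @lessdot_struct k r Hld.
have sk : sorted geq k by case: Hld => /andP[].
rewrite -(@hook_ratio k r i Hi Hp Hs Hc pk sk R).
rewrite /alpha; apply: cvgM; apply: cvg_bigprod => c.
  by rewrite !hookE; apply: ratio_lim; rewrite addnS.
by rewrite !hookE'; apply: ratio_lim; rewrite addSn.
Qed.

Lemma alphabar_lim k r : lessdot k r ->
  alphabar r k q q @[q --> (1:R)^'] --> ((Hprod k)%:R / (Hprod r)%:R : R).
Proof.
move=> Hld; have [i [Hi Hp Hs Hc pk]] := @lessdot_struct k r Hld.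
have sk : sorted geq k by case: Hld => /andP[].
rewrite -(@hook_ratio k r i Hi Hp Hs Hc pk sk R).
rewrite /alphabar; apply: cvgM; apply: cvg_bigprod => c.
  by rewrite !hookE'; apply: ratio_lim; rewrite addSn.
by rewrite !hookE; apply: ratio_lim; rewrite addnS.
Qed.

End Final.

Lemma hAB lam mu nu : inD lam mu -> inU lam nu ->
  ((hook lam (c_mu_nu lam mu nu))%:Z = Aexp nu lam mu + Bexp nu lam mu \/
   (hook lam (c_mu_nu lam mu nu))%:Z = - (Aexp nu lam mu + Bexp nu lam mu))%R.
Proof.
move=> HD HU.
have [i1 [Hi1 Hp1 Hs1 Hc1 pk1]] := @lessdot_struct mu lam HD.
have [i2 [Hi2 Hp2 Hs2 Hc2 pk2]] := @lessdot_struct lam nu HU.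

have smu : sorted geq mu by case: HD => /andP[].
have slam : sorted geq lam by case: HU => /andP[].
have N1 : nfun' lam = (nfun' mu + nth 0 mu i1)%N by eapply nfun'_r; eauto.
have N2 : nfun' nu = (nfun' lam + nth 0 lam i2)%N by eapply nfun'_r; eauto.
have N3 : nfun lam = (nfun mu + i1)%N by eapply nfun_r; eauto.
have N4 : nfun nu = (nfun lam + i2)%N by eapply nfun_r; eauto.
have Hpl1 : pcol lam (nth 0%N mu i1).+1 = i1.+1 by rewrite Hc1 // pk1 eqxx addn1.
have Hl1 : nth 0%N lam i1 = (nth 0%N mu i1).+1 by rewrite Hi1 eqxx addn1.
rewrite /c_mu_nu /skew_cell Hs1 Hs2 /= /Aexp /Bexp.
case: ifP => hc.
- right; move: hc; rewrite mem_cells /= => hc.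
  have : (i2.+1 <= pcol lam (nth 0 mu i1).+1)%N by rewrite (@pcolP lam _ i2.+1 slam).
  rewrite Hpl1 /hook /arm /leg /prow /= Hpl1 => hi.
  rewrite N2 N4 N1 N3; lia.
- left; move: hc; rewrite mem_cells /= => /negbT hc.
  have : (pcol lam (nth 0 mu i1).+1 <= pcol lam (nth 0 lam i2).+1)%N.
    rewrite /pcol; apply: sub_count => z /= h; apply: leq_trans h; lia.
  rewrite Hpl1 pk2 /hook /arm /leg /prow /= Hl1 pk2 => hi.
  rewrite N2 N4 N1 N3; lia.
Qed.

Theorem lemma4p15 (R : realType) (lam mu nu : seq nat) :
  is_partition lam -> inD lam mu -> inU lam nu ->
  let h := (hook lam (c_mu_nu lam mu nu))%:R : R in
  let lim := ((Hprod lam)%:R ^+ 2 / ((Hprod mu)%:R * (Hprod nu)%:R))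
               * (h ^+ 2)^-1 : R in
  [/\ gamma nu lam mu q q @[q --> (1 : R)^'] --> h ^+ 2,
      Pforw lam mu nu q q @[q --> (1 : R)^'] --> lim
    & Pback lam mu nu q q @[q --> (1 : R)^'] --> lim].
Proof.
move=> _ HD HU h lim.
have hpos : forall l, ((Hprod l)%:R : R) != 0.
  move=> l; rewrite pnatr_eq0 -lt0n /Hprod prodn_gt0 // => c; by rewrite /hook addn1.
have hn0 : h != 0 by rewrite /h pnatr_eq0 /hook addn1.
have Hg : gamma nu lam mu q q @[q --> (1:R)^'] --> h ^+ 2.
  have -> : h ^+ 2 = ((Aexp nu lam mu + Bexp nu lam mu)%:~R) ^+ 2.
    by rewrite /h pmulrn; case: (@hAB lam mu nu HD HU) => ->; rewrite ?mulrNz ?sqrrN.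
  rewrite /gamma /=; exact: gamma_lim.
have Elim : lim = 1 * ((Hprod lam)%:R / (Hprod nu)%:R) *
    ((Hprod mu)%:R / (Hprod lam)%:R)^-1 * (h ^+ 2)^-1.
  rewrite /lim; field.
  by rewrite !hpos hn0.
have nz1 : ((Hprod mu)%:R / (Hprod lam)%:R : R) != 0 by rewrite mulf_neq0 ?invr_neq0.
have nz2 : h ^+ 2 != 0 by rewrite expf_neq0.
split => //.
- rewrite /Pforw /beta Elim.
  apply: cvgM; [apply: cvgM; [apply: cvgM|]|].
  + exact: cvg_exprz.
  + exact: alpha_lim.
  + by apply: cvgV => //; exact: alpha_lim.
  + by apply: cvgV => //.
- rewrite /Pback /betabar Elim.
  apply: cvgM; [apply: cvgM; [apply: cvgM|]|].
  + exact: cvg_exprz.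
  + exact: alphabar_lim.
  + by apply: cvgV => //; exact: alphabar_lim.
  + by apply: cvgV => //.
Qed.
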